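(* Let $R$ be a commutative ring with identity. Then: (1) If $M$ is a coprime $R$-module and $N$ is any $R$-module, then $\operatorname{Hom}_R(M,N)$ is a prime $R$-module. Conversely, if $N$ is an injective cogenerator and $\operatorname{Hom}_R(M,N)$ is prime, then $M$ is coprime. (2) If $R$ is Noetherian, $N$ is an injective cogenerator $R$-module and $M$ is a prime $R$-module, then $\operatorname{Hom}_R(M,N)$ is a coprime $R$-module. (3) If $M$ is a prime (resp. weakly prime, coprime, weakly coprime) $R$-module, then for every prime ideal $\mathcal P$ of $R$ the $R_{\mathcal P}$-module $M_{\mathcal P}$ is prime (resp. weakly prime, coprime, weakly coprime). (4) An injective cogenerator $R$-module which is reduced (resp. weakly prime) is coreduced (resp. weakly coprime). (5) A progenerator $R$-module which is coreduced (resp. weakly coprime) is reduced (resp. weakly prime).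
   Context: All rings are commutative with identity and modules are unital. An $R$-module $M$ is: prime if for all ideals $I$ of $R$ and all $m\in M$, $Im=0$ implies $m=0$ or $IM=0$; weakly prime if for all ideals $I,J$ of $R$ and $m\in M$, $IJm=0$ implies $Im=0$ or $Jm=0$; reduced if for all ideals $I$ and $m\in M$, $I^2m=0$ implies $Im=0$; coprime if for all ideals $I$ of $R$, $IM=0$ or $IM=M$; weakly coprime if for all ideals $I,J$ of $R$, $IJM=IM$ or $IJM=JM$; coreduced if $IM=I^2M$ for all ideals $I$. A progenerator is a finitely generated projective generator. *)

(* Defs.v *)
From HB Require Import structures.
From mathcomp Require Import all_boot all_algebra.
From mathcomp Require Import boolp classical_sets functions.

Set Implicit Arguments.
Unset Strict Implicit.
Unset Printing Implicit Defensive.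

Import GRing.Theory.
Local Open Scope ring_scope.

Section Ideals.
Variable R : comPzRingType.

Definition ideal (I : R -> Prop) : Prop :=
  [/\ I 0, (forall x y, I x -> I y -> I (x + y)) & (forall r x, I x -> I (r * x))].

Definition prime_ideal (P : R -> Prop) : Prop :=
  [/\ ideal P, ~ P 1 & (forall a b, P (a * b) -> P a \/ P b)].

Definition idealM (I J : R -> Prop) : R -> Prop := fun x =>
  exists s : seq (R * R),
    (forall p, p \in s -> I p.1 /\ J p.2) /\ x = \sum_(p <- s) p.1 * p.2.

Definition ideal_gen (s : seq R) : R -> Prop := fun x =>
  exists c : seq R, x = \sum_(i < size s) c`_i * s`_i.

Definition noetherian : Prop :=
  forall I : R -> Prop, ideal I -> exists s : seq R, forall x, I x <-> ideal_gen s x.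

End Ideals.

Section Modules.
Variable R : comPzRingType.
Variable M : lmodType R.

Definition modM (I : R -> Prop) : M -> Prop := fun y =>
  exists s : seq (R * M),
    (forall p, p \in s -> I p.1) /\ y = \sum_(p <- s) p.1 *: p.2.

Definition ann_elt (I : R -> Prop) (m : M) : Prop := forall a, I a -> a *: m = 0.

Definition prime_module : Prop :=
  forall (I : R -> Prop) (m : M), ideal I -> ann_elt I m ->
    m = 0 \/ (forall y, modM I y -> y = 0).

Definition weakly_prime_module : Prop :=
  forall (I J : R -> Prop) (m : M), ideal I -> ideal J ->
    ann_elt (idealM I J) m -> ann_elt I m \/ ann_elt J m.

Definition reduced_module : Prop :=
  forall (I : R -> Prop) (m : M), ideal I ->
    ann_elt (idealM I I) m -> ann_elt I m.

Definition coprime_module : Prop :=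
  forall I : R -> Prop, ideal I ->
    (forall y, modM I y -> y = 0) \/ (forall y, modM I y).

Definition weakly_coprime_module : Prop :=
  forall I J : R -> Prop, ideal I -> ideal J ->
    (forall y, modM (idealM I J) y <-> modM I y) \/
    (forall y, modM (idealM I J) y <-> modM J y).

Definition coreduced_module : Prop :=
  forall I : R -> Prop, ideal I ->
    forall y, modM I y <-> modM (idealM I I) y.

Definition injective_module : Prop :=
  forall (A B : lmodType R) (f : {linear A -> B}) (g : {linear A -> M}),
    injective f -> exists h : {linear B -> M}, forall a, h (f a) = g a.

Definition cogenerator_module : Prop :=
  forall (A : lmodType R) (a : A), a <> 0 ->
    exists f : {linear A -> M}, f a <> 0.

Definition finitely_generated_module : Prop :=
  exists s : seq M, forall x : M,
    exists c : seq R, x = \sum_(i < size s) c`_i *: s`_i.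

Definition projective_module : Prop :=
  forall (B C : lmodType R) (g : {linear B -> C}) (f : {linear M -> C}),
    (forall c, exists b, g b = c) ->
    exists h : {linear M -> B}, forall x, g (h x) = f x.

Definition generator_module : Prop :=
  forall (X : lmodType R) (x : X),
    exists s : seq ({linear M -> X} * M), x = \sum_(p <- s) p.1 p.2.

Definition progenerator_module : Prop :=
  [/\ finitely_generated_module, projective_module & generator_module].

End Modules.

(* Hom_R(M, N) as an R-module (submodule of the function module M -> N) *)
Section HomMod.
Variable R : comPzRingType.
Variables M N : lmodType R.

Definition is_hom : {pred M -> N} := fun f => `[< linear f >].

Lemma is_hom_subsemimod_closed : subsemimod_closed is_hom.
Proof.
split; [split|].
- by apply/asboolP => a u v /=; rewrite scaler0 addr0.
- move=> f g /asboolP Hf /asboolP Hg; apply/asboolP => a u v /=.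
  have -> : (f + g) (a *: u + v) = f (a *: u + v) + g (a *: u + v) by [].
  have -> : (f + g) u = f u + g u by [].
  have -> : (f + g) v = f v + g v by [].
  rewrite Hf Hg scalerDr; rewrite -!addrA; congr (_ + _); rewrite !addrA;
  congr (_ + _); by rewrite addrC.
- move=> a f /asboolP Hf; apply/asboolP => b u v /=.
  have E : forall w, (a *: f) w = a *: f w by [].
  by rewrite !E Hf scalerDr !scalerA mulrC.
Qed.

Definition HomMod := {f : M -> N | is_hom f}.
HB.instance Definition _ := [isSub of HomMod for @sval _ _].
HB.instance Definition _ := [Choice of HomMod by <:].
HB.instance Definition _ :=
  @GRing.SubChoice_isSubLmodule.Build R (M -> N) is_hom HomMod is_hom_subsemimod_closed.

End HomMod.

(* Localization at a prime ideal P, via its standard characterization  *)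
(* (Atiyah-Macdonald): these properties determine R_P and M_P up to    *)
(* unique isomorphism.                                                 *)
Section Localization.
Variable R : comPzRingType.
Variable P : R -> Prop.

Definition is_localization_ring (S : comPzRingType) (phi : {rmorphism R -> S}) : Prop :=
  [/\ (forall s, ~ P s -> exists t, phi s * t = 1),
      (forall x : S, exists r s, ~ P s /\ x * phi s = phi r) &
      (forall r, phi r = 0 -> exists u, ~ P u /\ u * r = 0)].

Definition is_localization_module (M : lmodType R)
    (S : comPzRingType) (phi : {rmorphism R -> S})
    (M' : lmodType S) (psi : M -> M') : Prop :=
  [/\ (forall m1 m2, psi (m1 + m2) = psi m1 + psi m2),
      (forall r m, psi (r *: m) = phi r *: psi m),
      (forall y : M', exists m s, ~ P s /\ phi s *: y = psi m) &
      (forall m, psi m = 0 -> exists u, ~ P u /\ u *: m = 0)].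

End Localization.

(* Main.v *)
Require Import Defs.
From HB Require Import structures.
From mathcomp Require Import all_boot all_algebra.
From mathcomp Require Import boolp classical_sets functions.
Set Implicit Arguments.
Unset Strict Implicit.
Unset Printing Implicit Defensive.
Import GRing.Theory.
Local Open Scope ring_scope.


Lemma big_in (T : eqType) (V : zmodType) (K : V -> Prop) (s : seq T) (F : T -> V) :
  K 0 -> (forall x y, K x -> K y -> K (x + y)) -> (forall p, p \in s -> K (F p)) ->
  K (\sum_(p <- s) F p).
Proof. by move=> K0 KD KF; rewrite big_seq; apply: big_ind. Qed.

Section IdealLemmas.
Variable R : comPzRingType.
Implicit Types I J : R -> Prop.

Lemma idl0 I : ideal I -> I 0. Proof. by case. Qed.
Lemma idlD I x y : ideal I -> I x -> I y -> I (x + y). Proof. by case=> _ H _; apply: H. Qed.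
Lemma idl_mull I r x : ideal I -> I x -> I (r * x). Proof. by case=> _ _ H; apply: H. Qed.
Lemma idl_mulr I r x : ideal I -> I x -> I (x * r).
Proof. by move=> HI Ix; rewrite mulrC; apply: idl_mull. Qed.
Lemma ideal_sum I (T : eqType) (s : seq T) F : ideal I ->
  (forall p, p \in s -> I (F p)) -> I (\sum_(p <- s) F p).
Proof. by move=> HI; apply: big_in; [apply: idl0|move=> x y; apply: idlD]. Qed.

Lemma idealM_mul I J a b : I a -> J b -> idealM I J (a * b).
Proof.
move=> Ia Jb; exists [:: (a, b)]; split; last by rewrite big_seq1.
by move=> p; rewrite inE => /eqP ->.
Qed.

Lemma idealM_ideal I J : ideal I -> ideal J -> ideal (idealM I J).
Proof.
move=> HI HJ; split.
- by exists [::]; rewrite big_nil.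
- move=> x y [s1 [H1 ->]] [s2 [H2 ->]]; exists (s1 ++ s2); split; last by rewrite big_cat.
  by move=> p; rewrite mem_cat => /orP [] ?; [apply: H1|apply: H2].
- move=> r x [s [H ->]]; exists [seq (r * p.1, p.2) | p <- s]; split.
  + move=> q /mapP [p ps ->] /=; have [] := H p ps; split => //; exact: idl_mull.
  + by rewrite big_map mulr_sumr; apply: eq_bigr => p _ /=; rewrite mulrA.
Qed.

Lemma idealM_l I J x : ideal I -> idealM I J x -> I x.
Proof. by move=> HI [s [H ->]]; apply: ideal_sum => // p /H [Ip Jp]; exact: idl_mulr. Qed.
Lemma idealM_r I J x : ideal J -> idealM I J x -> J x.
Proof. by move=> HJ [s [H ->]]; apply: ideal_sum => // p /H [Ip Jp]; exact: idl_mull. Qed.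

Definition pid (a : R) : R -> Prop := fun r => exists c, r = c * a.
Lemma pid_ideal a : ideal (pid a).
Proof.
split; first by exists 0; rewrite mul0r.
- by move=> x y [c ->] [d ->]; exists (c + d); rewrite mulrDl.
- by move=> r x [c ->]; exists (r * c); rewrite mulrA.
Qed.
Lemma pid_self a : pid a a. Proof. by exists 1; rewrite mul1r. Qed.

End IdealLemmas.

Lemma preim_ideal (R S : comPzRingType) (phi : {rmorphism R -> S}) (I : S -> Prop) :
  ideal I -> ideal (fun r => I (phi r)).
Proof.
case=> H0 HD HM; split.
- by rewrite rmorph0.
- by move=> x y Ix Iy; rewrite rmorphD; apply: HD.
- by move=> r x Ix; rewrite rmorphM; apply: HM.
Qed.

Section ModLemmas.
Variable R : comPzRingType.
Variable M : lmodType R.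
Implicit Types I J : R -> Prop.

Lemma modM0 I : modM I (0 : M).
Proof. by exists [::]; rewrite big_nil. Qed.
Lemma modMD I (x y : M) : modM I x -> modM I y -> modM I (x + y).
Proof.
move=> [s1 [H1 ->]] [s2 [H2 ->]]; exists (s1 ++ s2); split; last by rewrite big_cat.
by move=> p; rewrite mem_cat => /orP [] ?; [apply: H1|apply: H2].
Qed.
Lemma modMZ I r (x : M) : ideal I -> modM I x -> modM I (r *: x).
Proof.
move=> HI [s [H ->]]; exists [seq (r * p.1, p.2) | p <- s]; split.
- by move=> q /mapP [p ps ->] /=; exact: idl_mull HI (H p ps).
- by rewrite big_map scaler_sumr; apply: eq_bigr => p _ /=; rewrite scalerA.
Qed.
Lemma modM1 I a (m : M) : I a -> modM I (a *: m).
Proof.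
move=> Ia; exists [:: (a, m)]; split; last by rewrite big_seq1.
by move=> p; rewrite inE => /eqP ->.
Qed.
Lemma modM_mono I J (y : M) : (forall x, I x -> J x) -> modM I y -> modM J y.
Proof. by move=> IJ [s [H ->]]; exists s; split => // p /H; apply: IJ. Qed.
Lemma modM_ind I (K : M -> Prop) (y : M) : K 0 -> (forall x y, K x -> K y -> K (x + y)) ->
  (forall a m, I a -> K (a *: m)) -> modM I y -> K y.
Proof. by move=> K0 KD KZ [s [H ->]]; apply: big_in => // p /H; apply: KZ. Qed.

Lemma ann_idealM I J (m : M) : (forall a b, I a -> J b -> (a * b) *: m = 0) ->
  ann_elt (idealM I J) m.
Proof.
move=> H c [s [Hs ->]]; rewrite scaler_suml; apply: (@big_in _ _ (fun v => v = 0)) => //.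
- by move=> x y -> ->; rewrite addr0.
- by move=> p /Hs [Ip Jp]; apply: H.
Qed.

Lemma prime_elt : prime_module M -> forall a (m x : M), a *: m = 0 -> m = 0 \/ a *: x = 0.
Proof.
move=> pM a m x am.
have [] := pM (pid a) m (pid_ideal a).
- by move=> r [c ->]; rewrite -scalerA am scaler0.
- by left.
- by move=> H; right; apply: H; apply: modM1; apply: pid_self.
Qed.

Lemma wprime_elt : weakly_prime_module M -> forall a b (m : M), (a * b) *: m = 0 ->
  a *: m = 0 \/ b *: m = 0.
Proof.
move=> wM a b m abm.
have [] := wM (pid a) (pid b) m (pid_ideal a) (pid_ideal b).
- apply: ann_idealM => _ _ [c ->] [d ->].
  by rewrite mulrACA -scalerA abm scaler0.
- by move=> H; left; apply: H; apply: pid_self.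
- by move=> H; right; apply: H; apply: pid_self.
Qed.

End ModLemmas.


Record submodP (R : comPzRingType) (M : lmodType R) := SubmodP {
  sK : M -> Prop;
  sK0 : sK 0;
  sKD : forall x y, sK x -> sK y -> sK (x+y);
  sKZ : forall r x, sK x -> sK (r *: x) }.

Section Quot.
Variables (R : comPzRingType) (M : lmodType R) (S : submodP M).
Let K := sK S.
Let K0 : K 0 := sK0 S.
Let KD : forall x y, K x -> K y -> K (x+y) := @sKD _ _ S.
Let KZ : forall r x, K x -> K (r *: x) := @sKZ _ _ S.

Definition canon (x : M) : M := xget 0 [set y | K (x - y)].
Lemma canon_sim x : K (x - canon x).
Proof. by apply: (@xgetI _ 0 [set y | K (x - y)] x); rewrite /= subrr. Qed.
Lemma KN x : K x -> K (- x).
Proof. by move=> Kx; rewrite -scaleN1r; apply: KZ. Qed.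
Lemma KB x y : K x -> K y -> K (x - y).
Proof. by move=> Kx Ky; apply: KD => //; apply: KN. Qed.
Lemma canonE x y : K (x - y) -> canon x = canon y.
Proof.
move=> Kxy; rewrite /canon; congr xget; apply: funext => z; apply: propext; split=> /= H.
- have -> : y - z = (x - z) - (x - y) by rewrite [RHS]addrC opprB addrA subrK.
  exact: KB.
- have -> : x - z = (x - y) + (y - z) by rewrite addrA subrK.
  exact: KD.
Qed.
Lemma canon_idem x : canon (canon x) = canon x.
Proof. apply: canonE; rewrite -opprB; apply: KN; exact: canon_sim. Qed.

Record Q := MkQ { qval : M; qP : canon qval == qval }.
HB.instance Definition _ := [isSub for qval].
HB.instance Definition _ := [Choice of Q by <:].

Definition mkQ (x : M) : Q := @MkQ (canon x) (introT eqP (canon_idem x)).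
Lemma valQ (q : Q) : mkQ (val q) = q.
Proof. by apply: val_inj; rewrite /= (eqP (valP q)). Qed.
Lemma mkQ_surj (p : Q) : exists x, p = mkQ x.
Proof. by exists (val p); rewrite valQ. Qed.
Lemma mkQ_eq x y : K (x - y) -> mkQ x = mkQ y.
Proof. by move=> H; apply: val_inj; rewrite /= (canonE H). Qed.
Lemma mkQ_eqK x y : mkQ x = mkQ y -> K (x - y).
Proof.
move/(congr1 val) => /= E.
have -> : x - y = (x - canon x) - (y - canon y) by rewrite E opprB addrA subrK.
apply: KB; exact: canon_sim.
Qed.
Lemma Kmk x : K (canon x - x).
Proof. rewrite -opprB; apply: KN; exact: canon_sim. Qed.

Definition zeroQ : Q := mkQ 0.
Definition oppQ (q : Q) : Q := mkQ (- val q).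
Definition addQ (p q : Q) : Q := mkQ (val p + val q).
Definition scaleQ (r : R) (q : Q) : Q := mkQ (r *: val q).

Lemma addQ_mk x y : addQ (mkQ x) (mkQ y) = mkQ (x + y).
Proof.
apply: mkQ_eq => /=.
have -> : canon x + canon y - (x + y) = (canon x - x) + (canon y - y).
  by rewrite opprD addrACA.
apply: KD; exact: Kmk.
Qed.
Lemma oppQ_mk x : oppQ (mkQ x) = mkQ (- x).
Proof. apply: mkQ_eq => /=; rewrite -opprD; apply: KN; exact: Kmk. Qed.
Lemma scaleQ_mk r x : scaleQ r (mkQ x) = mkQ (r *: x).
Proof. apply: mkQ_eq => /=; rewrite -scalerBr; apply: KZ; exact: Kmk. Qed.

Lemma addQA : associative addQ.
Proof. by move=> p q r; have [xp ->] := mkQ_surj p; have [xq ->] := mkQ_surj q; have [xr ->] := mkQ_surj r; rewrite !addQ_mk addrA. Qed.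
Lemma addQC : commutative addQ.
Proof. by move=> p q; have [xp ->] := mkQ_surj p; have [xq ->] := mkQ_surj q; rewrite !addQ_mk addrC. Qed.
Lemma add0Q : left_id zeroQ addQ.
Proof. by move=> p; have [xp ->] := mkQ_surj p; rewrite /zeroQ !addQ_mk add0r. Qed.
Lemma addNQ : left_inverse zeroQ oppQ addQ.
Proof. by move=> p; have [xp ->] := mkQ_surj p; rewrite /zeroQ oppQ_mk addQ_mk addNr. Qed.

HB.instance Definition _ := GRing.isZmodule.Build Q addQA addQC add0Q addNQ.

Lemma scaleQA a b v : scaleQ a (scaleQ b v) = scaleQ (a * b) v.
Proof. by have [xv ->] := mkQ_surj v; rewrite !scaleQ_mk scalerA. Qed.
Lemma scale1Q : left_id 1 scaleQ.
Proof. by move=> v; have [xv ->] := mkQ_surj v; rewrite !scaleQ_mk scale1r. Qed.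
Lemma scaleQDr : right_distributive scaleQ +%R.
Proof.
move=> a p q; have [xp ->] := mkQ_surj p; have [xq ->] := mkQ_surj q;
have E : forall u v : Q, u + v = addQ u v by [].
rewrite !E !scaleQ_mk !addQ_mk ?scaleQ_mk scalerDr; apply: mkQ_eq => /=.
by rewrite opprD addrACA -!scalerBr -scalerDr; apply: KZ; apply: KD; apply: Kmk.
Qed.
Lemma scaleQDl v : {morph scaleQ^~ v: a b / a + b}.
Proof.
move=> a b; have [xv ->] := mkQ_surj v;
have E : forall u v : Q, u + v = addQ u v by [].
by rewrite E !scaleQ_mk addQ_mk scalerDl.
Qed.

HB.instance Definition _ := GRing.Zmodule_isLmodule.Build R Q scaleQA scale1Q scaleQDr scaleQDl.

Lemma mkQ_lin : linear mkQ.
Proof.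
move=> a x y.
have E : forall u v : Q, u + v = addQ u v by [].
have F : forall r (u : Q), r *: u = scaleQ r u by [].
by rewrite E F scaleQ_mk addQ_mk.
Qed.
HB.instance Definition _ := GRing.isLinear.Build R M Q *:%R mkQ mkQ_lin.

End Quot.

Lemma separate (R : comPzRingType) (M N : lmodType R) (K : M -> Prop) :
  cogenerator_module N -> K 0 -> (forall x y, K x -> K y -> K (x + y)) ->
  (forall r x, K x -> K (r *: x)) ->
  forall y, ~ K y -> exists f : {linear M -> N}, (forall k, K k -> f k = 0) /\ f y <> 0.
Proof.
move=> cog K0 KD KZ y Ky.
pose S := SubmodP K0 KD KZ.
have nz : @mkQ R M S y <> 0.
  move=> E; apply: Ky.
  have := @mkQ_eqK R M S y 0 E; by rewrite subr0.
have [h hy] := cog (Q S) _ nz.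
exists (h \o mkQ S : {linear M -> N}); split => /=.
- move=> k Kk; have -> : mkQ S k = 0 by apply: mkQ_eq; rewrite subr0.
  exact: linear0.
- exact: hy.
Qed.


Section HomLemmas.
Variable R : comPzRingType.
Variables M N : lmodType R.

Lemma homP (f : HomMod M N) : linear (val f).
Proof. by move: (valP f) => /asboolP. Qed.

Definition toLin (f : HomMod M N) : {linear M -> N} :=
  HB.pack (val f) (GRing.isLinear.Build R M N *:%R (val f) (homP f)).
Lemma toLinE f x : toLin f x = val f x. Proof. by []. Qed.

Definition ofLin (g : {linear M -> N}) : HomMod M N :=
  Sub (g : M -> N) (introT (asboolP _) (linearP g)).
Lemma ofLinE g x : val (ofLin g) x = g x. Proof. by []. Qed.

Lemma valZx (a : R) (f : HomMod M N) x : val (a *: f) x = a *: val f x.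
Proof. by []. Qed.
Lemma val0x x : val (0 : HomMod M N) x = 0. Proof. by []. Qed.
Lemma valDx (f g : HomMod M N) x : val (f + g) x = val f x + val g x. Proof. by []. Qed.

Lemma val_sum (s : seq (R * HomMod M N)) x :
  val (\sum_(p <- s) p.1 *: p.2) x = \sum_(p <- s) p.1 *: val p.2 x.
Proof.
elim: s => [|p s IH]; first by rewrite !big_nil.
by rewrite !big_cons valDx IH valZx.
Qed.

Lemma hom_eq (f g : HomMod M N) : (forall x, val f x = val g x) -> f = g.
Proof. by move=> H; apply: val_inj; apply: funext. Qed.

Lemma valZlin (a : R) (f : HomMod M N) x : a *: val f x = val f (a *: x).
Proof. by rewrite -!toLinE linearZ. Qed.

End HomLemmas.

Lemma part1a (R : comPzRingType) (M N : lmodType R) :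
  coprime_module M -> prime_module (HomMod M N).
Proof.
move=> cM I f HI Hf; case: (cM I HI) => [H0|H1].
- right => g [s [Hs ->]]; apply: hom_eq => x; rewrite val_sum val0x.
  apply: (@big_in _ _ (fun v => v = 0)) => //; first by move=> ? ? -> ->; rewrite addr0.
  move=> p /Hs Ip; rewrite valZlin (H0 (p.1 *: x)); last exact: modM1.
  by rewrite -toLinE linear0.
- left; apply: hom_eq => x; rewrite val0x.
  have [s [Hs ->]] := H1 x; rewrite -toLinE linear_sum.
  apply: (@big_in _ _ (fun v => v = 0)) => //; first by move=> ? ? -> ->; rewrite addr0.
  move=> p /Hs Ip; rewrite toLinE -valZlin -valZx (Hf _ Ip).
  by rewrite val0x.
Qed.


Lemma part1b (R : comPzRingType) (M N : lmodType R) :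
  cogenerator_module N -> prime_module (HomMod M N) -> coprime_module M.
Proof.
move=> cog pH I HI.
case: (pselect (forall y : M, modM I y)) => [Hall|]; first by right.
move=> /existsNP [y Hy].
have [f [fK fy]] := separate cog (@modM0 _ M I) (@modMD _ M I) (fun r x => @modMZ _ M I r x HI) Hy.
have annF : ann_elt I (ofLin f).
  move=> a Ia; apply: hom_eq => x; rewrite valZx valZlin ofLinE fK ?val0x //.
  exact: modM1.
case: (pH I (ofLin f) HI annF) => [F0|H0].
- by case: fy; have := congr1 (fun g => val g y) F0; rewrite ofLinE val0x.
- left => z Hz; case: (pselect (z = 0)) => // nz.
  have [g gz] := cog M z nz; exfalso; apply: gz.
  move: Hz => [s [Hs ->]]; rewrite linear_sum.
  apply: (@big_in _ _ (fun v => v = 0)) => //; first by move=> ? ? -> ->; rewrite addr0.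
  move=> p ps; rewrite -(ofLinE g (p.1 *: p.2)) -(valZlin p.1 (ofLin g) p.2) -(valZx p.1 (ofLin g) p.2) (H0 (p.1 *: ofLin g)) ?val0x //.
  by apply: modM1; apply: Hs.
Qed.

Lemma part2 (R : comPzRingType) (M N : lmodType R) :
  injective_module N -> prime_module M -> coprime_module (HomMod M N).
Proof.
move=> inj pM I HI.
case: (pselect (exists a (m : M), I a /\ a *: m <> 0)) => [[a [m0 [Ia am0]]]|Hn].
- right => F.
  have ainj : forall x : M, a *: x = 0 -> x = 0.
    by move=> x ax; case: (prime_elt pM m0 ax).
  have lin : linear (fun x : M => a *: x).
    by move=> b u v; rewrite scalerDr !scalerA mulrC.
  pose mula : {linear M -> M} :=
    HB.pack (fun x : M => a *: x) (GRing.isLinear.Build R M M *:%R (fun x : M => a *: x) lin).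
  have injm : injective mula.
    move=> x y /= E; apply/eqP; rewrite -subr_eq0; apply/eqP; apply: ainj.
    by rewrite scalerBr E subrr.
  have [h hE] := inj M M mula (toLin F) injm.
  exists [:: (a, ofLin h)]; split; first by move=> p; rewrite inE => /eqP ->.
  rewrite big_seq1; apply: hom_eq => x; rewrite (valZx a (ofLin h) x) valZlin ofLinE.
  by move: (hE x) => /= ->.
- left => G [s [Hs ->]]; apply: hom_eq => x; rewrite val_sum val0x.
  apply: (@big_in _ _ (fun v => v = 0)) => //; first by move=> ? ? -> ->; rewrite addr0.
  move=> p /Hs Ip; rewrite valZlin.
  have -> : p.1 *: x = 0.
    by apply: contrapT => nz; apply: Hn; exists p.1, x.
  by rewrite -toLinE linear0.
Qed.


Section Loc.
Variables (R S : comPzRingType) (P : R -> Prop) (phi : {rmorphism R -> S}).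
Variables (M : lmodType R) (MP : lmodType S) (psi : M -> MP).
Hypothesis HP : prime_ideal P.
Hypothesis Hloc : is_localization_ring P phi.
Hypothesis Hmod : is_localization_module P phi psi.

Let Hunit : forall s, ~ P s -> exists t, phi s * t = 1.
Proof. by case: Hloc. Qed.
Let Hfrac : forall x : S, exists r s, ~ P s /\ x * phi s = phi r.
Proof. by case: Hloc. Qed.
Let psiD : forall m1 m2, psi (m1 + m2) = psi m1 + psi m2.
Proof. by case: Hmod. Qed.
Let psiZ : forall r m, psi (r *: m) = phi r *: psi m.
Proof. by case: Hmod. Qed.
Let Hmfrac : forall y : MP, exists m s, ~ P s /\ phi s *: y = psi m.
Proof. by case: Hmod. Qed.
Let Hmker : forall m, psi m = 0 -> exists u, ~ P u /\ u *: m = 0.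
Proof. by case: Hmod. Qed.

Let nP_mul s t : ~ P s -> ~ P t -> ~ P (s * t).
Proof. by case: HP => _ _ H ns nt /H []. Qed.

Let psi0 : psi 0 = 0.
Proof. by apply: (addrI (psi 0)); rewrite -psiD !addr0. Qed.

Let unit_cancel s (y : MP) : ~ P s -> phi s *: y = 0 -> y = 0.
Proof.
move=> ns E; have [t Ht] := Hunit ns.
by rewrite -[y]scale1r -Ht mulrC -scalerA E scaler0.
Qed.

Let psi_sum (s : seq (R * M)) :
  psi (\sum_(p <- s) p.1 *: p.2) = \sum_(p <- s) phi p.1 *: psi p.2.
Proof.
elim: s => [|p s IH]; first by rewrite !big_nil psi0.
by rewrite !big_cons psiD IH psiZ.
Qed.

Let frac_kill x r s1 s0 m0 (y : MP) : x * phi s1 = phi r -> phi s0 *: y = psi m0 ->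
  phi (s1 * s0) *: (x *: y) = psi (r *: m0).
Proof.
move=> E1 E0; rewrite psiZ -E1 -E0 rmorphM !scalerA; congr (_ *: _).
by rewrite [LHS]mulrC mulrA.
Qed.

Let loc_elt (x : S) (w : MP) : exists r n s1 s,
  [/\ ~ P s, x * phi s1 = phi r & phi s *: (x *: w) = psi (r *: n)].
Proof.
have [r [s1 [ns1 E1]]] := Hfrac x; have [n [t [nt E2]]] := Hmfrac w.
exists r, n, s1, (s1 * t); split => //; first exact: nP_mul.
exact: frac_kill.
Qed.

Let preim (I : S -> Prop) : R -> Prop := fun r => I (phi r).

Lemma loc_prime : prime_module M -> prime_module MP.
Proof.
move=> pM I y HI Hy; have [m0 [s0 [ns0 E0]]] := Hmfrac y.
case: (pselect (m0 = 0)) => [m00|mn0].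
  by left; apply: (unit_cancel ns0); rewrite E0 m00 psi0.
right => z; apply: (@modM_ind _ _ I (fun v => v = 0) z) => //.
  by move=> ? ? -> ->; rewrite addr0.
move=> x w Ix; have [r [n [s1 [s [ns Exr Ew]]]]] := loc_elt x w.
apply: (unit_cancel ns); rewrite Ew.
have Ir : I (phi r) by rewrite -Exr; apply: idl_mulr HI Ix.
have H0 : psi (r *: m0) = 0.
  by rewrite psiZ -E0 scalerA mulrC -scalerA (Hy _ Ir) scaler0.
have [u [nu Eu]] := Hmker H0; rewrite scalerA in Eu.
case: (prime_elt pM n Eu) => // Eun.
apply: (unit_cancel nu); by rewrite -psiZ scalerA Eun psi0.
Qed.

Lemma loc_wprime : weakly_prime_module M -> weakly_prime_module MP.
Proof.
move=> wM I J y HI HJ Hy; have [m0 [s0 [ns0 E0]]] := Hmfrac y.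
case: (pselect (exists q, ~ P q /\ q *: m0 = 0)) => [[q [nq Eq]]|Hq].
  have pm0 : psi m0 = 0 by apply: (unit_cancel nq); rewrite -psiZ Eq psi0.
  have y0 : y = 0 by apply: (unit_cancel ns0); rewrite E0 pm0.
  by left => a _; rewrite y0 scaler0.
have annM : ann_elt (idealM (preim I) (preim J)) m0.
  apply: ann_idealM => a b Ia Jb.
  have H0 : psi ((a * b) *: m0) = 0.
    rewrite psiZ -E0 scalerA mulrC -scalerA (Hy (phi (a * b))) ?scaler0 //.
    by rewrite rmorphM; apply: idealM_mul.
  have [u [nu Eu]] := Hmker H0; rewrite scalerA in Eu.
  case: (wprime_elt wM Eu) => // Eum; case: Hq; by exists u.
have kill : forall (K : S -> Prop), ideal K -> ann_elt (preim K) m0 -> ann_elt K y.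
  move=> K HK H x Kx; have [r [s1 [ns1 E1]]] := Hfrac x.
  have Kr : K (phi r) by rewrite -E1; apply: idl_mulr HK Kx.
  apply: (unit_cancel (nP_mul ns1 ns0)).
  by rewrite (frac_kill E1 E0) (H r Kr) psi0.
case: (wM (preim I) (preim J) m0 (preim_ideal phi HI) (preim_ideal phi HJ) annM) => H.
- by left; apply: kill.
- by right; apply: kill.
Qed.

Lemma loc_coprime : coprime_module M -> coprime_module MP.
Proof.
move=> cM I HI; case: (cM (preim I) (preim_ideal phi HI)) => [H0|H1].
- left => z; apply: (@modM_ind _ _ I (fun v => v = 0) z) => //.
    by move=> ? ? -> ->; rewrite addr0.
  move=> x w Ix; have [r [n [s1 [s [ns Exr Ew]]]]] := loc_elt x w.
  apply: (unit_cancel ns); rewrite Ew (H0 (r *: n)) ?psi0 //.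
  by apply: modM1; rewrite /preim -Exr; apply: idl_mulr HI Ix.
- right => z; have [n [t [nt Et]]] := Hmfrac z; have [w Hw] := Hunit nt.
  have [s [Hs En]] := H1 n.
  exists [seq (w * phi p.1, psi p.2) | p <- s]; split.
  + by move=> q /mapP [p ps ->] /=; apply: idl_mull HI (Hs p ps).
  + have -> : z = w *: psi n by rewrite -Et scalerA mulrC Hw scale1r.
    rewrite big_map En psi_sum scaler_sumr; apply: eq_bigr => p _.
    by rewrite scalerA.
Qed.

Let phi_idealM (I J : S -> Prop) c : idealM (preim I) (preim J) c -> idealM I J (phi c).
Proof.
move=> [s [Hs ->]]; exists [seq (phi p.1, phi p.2) | p <- s]; split.
- by move=> q /mapP [p ps ->] /=; apply: Hs.
- by rewrite rmorph_sum big_map; apply: eq_bigr => p _; rewrite rmorphM.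
Qed.

Let wc_loc (I J K : S -> Prop) : ideal I -> ideal J -> ideal K ->
  (forall x, idealM I J x -> K x) ->
  (forall y : M, modM (idealM (preim I) (preim J)) y <-> modM (preim K) y) ->
  forall z : MP, modM (idealM I J) z <-> modM K z.
Proof.
move=> HI HJ HK HIJK H z; split; first by apply: modM_mono.
apply: (@modM_ind _ _ K (modM (idealM I J)) z).
- exact: modM0.
- exact: modMD.
move=> x w Kx; have [r [n [s1 [s [ns Exr Ew]]]]] := loc_elt x w.
have Kr : modM (preim K) (r *: n).
  by apply: modM1; rewrite /preim -Exr; apply: idl_mulr HK Kx.
have [t [Ht Et]] := (H (r *: n)).2 Kr.
have [v Hv] := Hunit ns.
have -> : x *: w = v *: psi (r *: n) by rewrite -Ew scalerA mulrC Hv scale1r.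
exists [seq (v * phi p.1, psi p.2) | p <- t]; split.
- move=> q /mapP [p pt ->] /=; apply: idl_mull (idealM_ideal HI HJ) _.
  exact: phi_idealM (Ht p pt).
- rewrite big_map Et psi_sum scaler_sumr; apply: eq_bigr => p _.
  by rewrite scalerA.
Qed.

Lemma loc_wcoprime : weakly_coprime_module M -> weakly_coprime_module MP.
Proof.
move=> wM I J HI HJ.
case: (wM (preim I) (preim J) (preim_ideal phi HI) (preim_ideal phi HJ)) => H.
- left; apply: wc_loc => // x; exact: idealM_l HI.
- right; apply: wc_loc => // x; exact: idealM_r HJ.
Qed.

End Loc.


Lemma part4a (R : comPzRingType) (N : lmodType R) :
  cogenerator_module N -> reduced_module N -> coreduced_module N.
Proof.
move=> cog rN I HI y; split => Hy; last first.
  by apply: modM_mono Hy => x; apply: idealM_l HI.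
apply: contrapT => Hn.
have HII := idealM_ideal HI HI.
have [f [fK fy]] := separate cog (@modM0 _ N _) (@modMD _ N _)
   (fun r x => @modMZ _ N _ r x HII) Hn.
apply: fy; move: Hy => [s [Hs ->]]; rewrite linear_sum.
apply: (@big_in _ _ (fun v => v = 0)) => //; first by move=> ? ? -> ->; rewrite addr0.
move=> p ps.
have ann : ann_elt (idealM I I) (f p.2).
  by move=> c Hc; rewrite -linearZ_LR fK //; apply: modM1.
by rewrite linearZ_LR; apply: (rN I (f p.2) HI ann); apply: Hs.
Qed.

Lemma sep_elt (R : comPzRingType) (N : lmodType R) (I0 : R -> Prop) (K : N -> Prop) y :
  K 0 -> (forall x y, K x -> K y -> K (x + y)) -> modM I0 y -> ~ K y ->
  exists a u, I0 a /\ ~ K (a *: u).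
Proof.
move=> K0 KD Hy nK; apply: contrapT => H; apply: nK.
apply: (@modM_ind _ _ I0 K y) => // a m Ia.
by apply: contrapT => nk; apply: H; exists a, m.
Qed.

Lemma part4b (R : comPzRingType) (N : lmodType R) :
  cogenerator_module N -> weakly_prime_module N -> weakly_coprime_module N.
Proof.
move=> cog wN I J HI HJ; have HIJ := idealM_ideal HI HJ.
case: (pselect (forall y : N, modM I y -> modM (idealM I J) y)) => [HIy|nI].
  left => y; split; last exact: HIy.
  by apply: modM_mono => x; apply: idealM_l HI.
case: (pselect (forall y : N, modM J y -> modM (idealM I J) y)) => [HJy|nJ].
  right => y; split; last exact: HJy.
  by apply: modM_mono => x; apply: idealM_r HJ.
exfalso.
move: nI => /existsNP [y1] /(not_implyP) [Hy1 nHy1].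
move: nJ => /existsNP [y2] /(not_implyP) [Hy2 nHy2].
have [i [u [Ii Hu]]] := sep_elt (@modM0 _ N _) (@modMD _ N _) Hy1 nHy1.
have [j [v [Jj Hv]]] := sep_elt (@modM0 _ N _) (@modMD _ N _) Hy2 nHy2.
have [f1 [f1K f1y]] := separate cog (@modM0 _ N _) (@modMD _ N _)
   (fun r x => @modMZ _ N _ r x HIJ) Hu.
have [f2 [f2K f2y]] := separate cog (@modM0 _ N _) (@modMD _ N _)
   (fun r x => @modMZ _ N _ r x HIJ) Hv.
rewrite linearZ_LR in f1y; rewrite linearZ_LR in f2y.
have ann1 : ann_elt (idealM I J) (f1 u).
  by move=> c Hc; rewrite -linearZ_LR f1K //; apply: modM1.
have ann2 : ann_elt (idealM I J) (f2 v).
  by move=> c Hc; rewrite -linearZ_LR f2K //; apply: modM1.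
have AJ1 : ann_elt J (f1 u).
  by case: (wN I J (f1 u) HI HJ ann1) => // H; case: f1y; apply: H.
have AI2 : ann_elt I (f2 v).
  by case: (wN I J (f2 v) HI HJ ann2) => // H; case: f2y; apply: H.
have ann : ann_elt (idealM I J) (f1 u + f2 v).
  by move=> c Hc; rewrite scalerDr ann1 // ann2 // addr0.
case: (wN I J (f1 u + f2 v) HI HJ ann) => H.
- by apply: f1y; have := H i Ii; rewrite scalerDr (AI2 i Ii) addr0.
- by apply: f2y; have := H j Jj; rewrite scalerDr (AJ1 j Jj) add0r.
Qed.

Lemma gen_sub (R : comPzRingType) (Q : lmodType R) : generator_module Q ->
  forall K L : R -> Prop, ideal K -> ideal L ->
  (forall y : Q, modM K y -> modM L y) -> forall a, K a -> L a.
Proof.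
move=> gen K L HK HL H a Ka.
have [s Hs] := gen R^o 1.
have -> : a = a * 1 by rewrite mulr1.
rewrite Hs mulr_sumr; apply: (@big_ind _ L) => [|x y|p _]; [exact: idl0 HL|exact: idlD HL|].
have -> : a * p.1 p.2 = p.1 (a *: p.2) by rewrite linearZ_LR.
have [t [Ht ->]] := H (a *: p.2) (modM1 _ Ka).
rewrite linear_sum; apply: ideal_sum => // q qt.
rewrite linearZ_LR; change (L (q.1 * p.1 q.2)); exact: idl_mulr HL (Ht q qt).
Qed.

Lemma part5 (R : comPzRingType) (Q : lmodType R) : progenerator_module Q ->
  (coreduced_module Q -> reduced_module Q) /\
  (weakly_coprime_module Q -> weakly_prime_module Q).
Proof.
case=> _ _ gen; split.
- move=> cQ I m HI Hm a Ia; apply: Hm.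
  apply: (gen_sub gen HI (idealM_ideal HI HI)) => // y; exact: (cQ I HI y).1.
- move=> wQ I J m HI HJ Hm.
  case: (wQ I J HI HJ) => H; [left|right] => a Ia; apply: Hm.
  + apply: (gen_sub gen HI (idealM_ideal HI HJ)) => // y; exact: (H y).2.
  + apply: (gen_sub gen HJ (idealM_ideal HI HJ)) => // y; exact: (H y).2.
Qed.

Unset Implicit Arguments.
Set Strict Implicit.

Theorem mainTheorem9 (R : comPzRingType) :
  (* (1) *)
  ((forall (M N : lmodType R), coprime_module M -> prime_module (HomMod M N)) /\
   (forall (M N : lmodType R), injective_module N -> cogenerator_module N ->
      prime_module (HomMod M N) -> coprime_module M)) /\
  (* (2) *)
  (noetherian R -> forall (M N : lmodType R),
      injective_module N -> cogenerator_module N -> prime_module M ->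
      coprime_module (HomMod M N)) /\
  (* (3) *)
  (forall (M : lmodType R) (P : R -> Prop), prime_ideal P ->
   forall (S : comPzRingType) (phi : {rmorphism R -> S}),
     is_localization_ring P phi ->
   forall (MP : lmodType S) (psi : M -> MP),
     is_localization_module P phi psi ->
     [/\ prime_module M -> prime_module MP,
         weakly_prime_module M -> weakly_prime_module MP,
         coprime_module M -> coprime_module MP &
         weakly_coprime_module M -> weakly_coprime_module MP]) /\
  (* (4) *)
  (forall N : lmodType R, injective_module N -> cogenerator_module N ->
     (reduced_module N -> coreduced_module N) /\
     (weakly_prime_module N -> weakly_coprime_module N)) /\
  (* (5) *)
  (forall Q : lmodType R, progenerator_module Q ->
     (coreduced_module Q -> reduced_module Q) /\
     (weakly_coprime_module Q -> weakly_prime_module Q)).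

Proof.
split; [split|split; [|split; [|split]]].
- move=> M N; exact: part1a.
- move=> M N _ cog; exact: part1b cog.
- move=> _ M N inj _ pM; exact: part2 inj pM.
- move=> M P HP S phi Hloc MP psi Hmod; split.
  + exact: (loc_prime HP Hloc Hmod).
  + exact: (loc_wprime HP Hloc Hmod).
  + exact: (loc_coprime HP Hloc Hmod).
  + exact: (loc_wcoprime HP Hloc Hmod).
- move=> N _ cog; split; [exact: part4a cog | exact: part4b cog].
- exact: part5.
Qed.
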